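(* $\mathcal{A}(\bm{p})$ is a Hermite ring, i.e. every finitely generated stably free $\mathcal{A}(\bm{p})$-module is free. Equivalently, for all $k<K$ in $\mathbb{N}$ and every $f\in\mathcal{A}(\bm{p})^{K\times k}$ admitting $g\in\mathcal{A}(\bm{p})^{k\times K}$ with $g\ast f=I_k$, there exist $f_c\in\mathcal{A}(\bm{p})^{K\times(K-k)}$ and $G\in\mathcal{A}(\bm{p})^{K\times K}$ with $G\ast[f\ \ f_c]=I_K$.
   Context: Fix $\bm{p}:\mathbb{N}_0\to(0,\infty)$ with $\lim_{n\to\infty}\bm{p}(n)^{1/n}=\infty$. For an entire function $f$ write $f(z)=\sum_{n\ge0}\widehat f(n)z^n$. $\mathcal{A}(\bm{p})$ is the set of entire functions $f$ with $\sup_{n\ge 0}\bm{p}(n)|\widehat f(n)|<\infty$, with pointwise addition and scalar multiplication, the weighted Hadamard product $(f\ast g)(z)=\sum_{n\ge0}\bm{p}(n)\widehat f(n)\widehat g(n)z^n$, and norm $\|f\|=\sup_{n\ge0}\bm{p}(n)|\widehat f(n)|$. It is a commutative unital ring with unit $\varepsilon(z)=\sum_{n\ge0}\frac{z^n}{\bm{p}(n)}$; matrix products use $\ast$ and $I_k$ is the $k\times k$ diagonal matrix with diagonal entries $\varepsilon$. *)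

(* Defs.v *)
From mathcomp Require Import all_boot all_algebra.
From mathcomp Require Import all_classical all_reals all_analysis.
From mathcomp Require Export complex.
Import GRing.Theory Num.Theory numFieldNormedType.Exports.
Set Implicit Arguments.
Unset Strict Implicit.
Unset Printing Implicit Defensive.
Local Open Scope classical_set_scope.
Local Open Scope ring_scope.

(* An entire function f(z) = sum_n fhat(n) z^n is represented by its Taylor
   coefficient sequence a : nat -> R[i]. *)

Definition entire_coeffs (R : realType) (a : nat -> R[i]) : Prop :=
  forall r : R, 0 <= r -> cvg (series (fun n => (Normc.normc (a n) : R) * r ^+ n : R) @ \oo).

Definition inA (R : realType) (p : nat -> R) (a : nat -> R[i]) : Prop :=
  entire_coeffs a /\ exists M : R, forall n, p n * Normc.normc (a n) <= M.

(* weighted Hadamard product: (f * g)^(n) = p(n) fhat(n) ghat(n) *)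
Definition hadp (R : realType) (p : nat -> R) (a b : nat -> R[i]) : nat -> R[i] :=
  fun n => (real_complex R (p n) * a n * b n)%R.

Definition epsA (R : realType) (p : nat -> R) : nat -> R[i] :=
  fun n => real_complex R ((p n)^-1).

Definition zeroA (R : realType) : nat -> R[i] := fun _ => 0.

Definition mxmulA (R : realType) (p : nat -> R) (m n l : nat)
    (A : 'M[nat -> R[i]]_(m, n)) (B : 'M[nat -> R[i]]_(n, l))
    : 'M[nat -> R[i]]_(m, l) :=
  \matrix_(i < m, j < l) (fun t => \sum_(h < n) hadp p (A i h) (B h j) t).

(* identity-type matrix: epsilon on the diagonal (i = j as naturals), 0 off it.
   For m = n this is I_n. *)
Definition idA (R : realType) (p : nat -> R) (m n : nat) : 'M[nat -> R[i]]_(m, n) :=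
  \matrix_(i < m, j < n) (if (i : nat) == j then epsA p else zeroA R).

Definition mxinA (R : realType) (p : nat -> R) (m n : nat)
    (A : 'M[nat -> R[i]]_(m, n)) : Prop :=
  forall i j, inA p (A i j).

(* Main.v *)
Require Import Defs.
From mathcomp Require Import all_boot all_order all_algebra.
From mathcomp Require Import all_classical all_reals all_analysis.
From mathcomp Require Import complex spectral sesquilinear.
From mathcomp Require Import lra.
Import Order.TTheory GRing.Theory Num.Theory numFieldNormedType.Exports.
Local Open Scope classical_set_scope.
Local Open Scope ring_scope.
Set Implicit Arguments.
Unset Strict Implicit.
Unset Printing Implicit Defensive.

Section Core.
Local Open Scope sesquilinear_scope.
Variable C : numClosedFieldType.

Lemma exW (K k : nat) (g : 'M[C]_(k, K)) : \rank g = k ->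
  exists W : 'M[C]_(K - k, K), W *m W^t* = 1%:M /\ W *m g^t* = 0.
Proof.
move=> rg.
set X := orthomx (@Num.conj_op C) (mx_of_hermitian (hermitian1mx _)) g.
have : exists r (W : 'M[C]_(r, K)), r = (K - k)%N /\ W *m W^t* = 1%:M /\ W *m g^t* = 0.
  exists (\rank X), (schmidt (row_base X)); split.
    by rewrite rank_ortho rg.
  split; first by apply/unitarymxP; rewrite schmidt_unitarymx // rank_leq_col.
  apply/orthomx1P.
  by rewrite eqmx_schmidt_free ?row_base_free // eq_row_base.
by case=> r [W [er HW]]; subst r; exists W.
Qed.

Lemma castmx_mulr m m' n l (e : m = m') (A : 'M[C]_(m, n)) (B : 'M[C]_(n, l)) :
  castmx (e, erefl n) A *m B = castmx (e, erefl l) (A *m B).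
Proof. by case: m' / e. Qed.


Lemma unit_entry r n (W : 'M[C]_(r, n)) : W *m W^t* = 1%:M ->
  forall i j, `|W i j| <= 1.
Proof.
move=> HW i j; have := congr1 (fun M : 'M[C]_r => M i i) HW.
rewrite !mxE eqxx /= (bigD1 j) //= !mxE -normCK => H.
rewrite -(@expr_le1 _ 2) ?normr_ge0 //.
rewrite -[X in _ <= X]H lerDl sumr_ge0 // => l _; rewrite !mxE.
exact: mul_conjC_ge0.
Qed.

Lemma mul_bound m n l (A : 'M[C]_(m, n)) (B : 'M[C]_(n, l)) a b :
  0 <= a -> 0 <= b -> (forall i j, `|A i j| <= a) -> (forall i j, `|B i j| <= b) ->
  forall i j, `|(A *m B) i j| <= n%:R * (a * b).
Proof.
move=> a0 b0 hA hB i j; rewrite mxE.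
apply: le_trans (ler_norm_sum _ _ _) _.
apply: le_trans (_ : \sum_(h < n) (a * b) <= _); last by rewrite sumr_const card_ord mulr_natl.
apply: ler_sum => h _; rewrite normrM; apply: ler_pM => //; exact: normr_ge0.
Qed.

Lemma core K k (hkK : (k <= K)%N) (F : 'M[C]_(K, k)) (g : 'M[C]_(k, K)) (Mf Mg : C)
  (hMf : 0 <= Mf) (hMg : 0 <= Mg)
  (bF : forall i j, `|F i j| <= Mf) (bg : forall i j, `|g i j| <= Mg)
  (gF : g *m F = 1%:M) :
  exists (fc : 'M[C]_(K, K - k)) (G : 'M[C]_(K, K)),
    (forall i j, `|fc i j| <= 1) /\
    (forall i j, `|G i j| <= Mg + K%:R * (1 * (1 + k%:R * (Mf * Mg)))) /\
    forall i j, (G *m row_mx F fc) i j = ((i : nat) == j)%:R.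
Proof.
have rg : \rank g = k.
  apply/eqP; rewrite eqn_leq rank_leq_row /=.
  by rewrite -{1}(mxrank1 C k) -gF mxrankM_maxl.
have [W [WW Wg]] := exW rg.
have gW : g *m W^t* = 0.
  apply/matrixP=> i j; rewrite !mxE.
  have := congr1 (fun M : 'M[C]_(K - k, k) => M j i) Wg; rewrite !mxE => H.
  rewrite -[LHS]conjCK rmorph_sum /=.
  rewrite (eq_bigr (fun l => W j l * ((g^t*) l i))); last first.
    by move=> l _; rewrite !mxE rmorphM /= conjCK mulrC.
  by rewrite H rmorph0.
set Wp := W *m (1%:M - F *m g).
exists (W^t*), (castmx (subnKC hkK, erefl K) (col_mx g Wp)).
have hB0 : 0 <= 1 + k%:R * (Mf * Mg) by rewrite addr_ge0 // mulr_ge0 // mulr_ge0.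
split; [|split].
- by move=> i j; rewrite !mxE norm_conjC; apply: unit_entry.
- move=> i j; rewrite castmxE /=.
  set ii := cast_ord _ i; case: (split_ordP ii) => i' ->.
    rewrite col_mxEu; apply: le_trans (bg _ _) _.
    by rewrite lerDl mulr_ge0 // mulr_ge0.
  rewrite col_mxEd.
  have HB : forall l j', `|(1%:M - F *m g) l j'| <= 1 + k%:R * (Mf * Mg).
    move=> l j'; rewrite !mxE; apply: le_trans (ler_normB _ _) _.
    apply: lerD.
      by case: (l == j'); rewrite ?normr1 ?normr0.
    by have := mul_bound hMf hMg bF bg l j'; rewrite mxE.
  rewrite cast_ord_id; apply: le_trans (mul_bound ler01 hB0 (unit_entry WW) HB i' j) _.
  by rewrite lerDr.
- have -> : castmx (subnKC hkK, erefl K) (col_mx g Wp) *m row_mx F (W^t*) = 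
             castmx (subnKC hkK, erefl (k + (K - k))%N) 1%:M.
    rewrite castmx_mulr mul_col_row gF gW /Wp -!mulmxA mulmxBl mulmxBl mul1mx mul1mx.
    rewrite -!mulmxA gF gW mulmx1 mulmx0 subrr subr0 mulmx0 WW.
    by rewrite -scalar_mx_block.
  by move=> i j; rewrite castmxE !mxE.
Qed.

End Core.
Lemma normc_ge0 (R : realType) (x : R[i]) : 0 <= Normc.normc x.
Proof. by case: x => a b; exact: sqrtr_ge0. Qed.

Lemma entire_of_bound (R : realType) (p : nat -> R)
  (p_pos : forall n, 0 < p n)
  (p_growth : (fun n => p n `^ (n%:R)^-1) @ \oo --> +oo)
  (a : nat -> R[i]) (B : R) :
  (forall n, p n * Normc.normc (a n) <= B) -> entire_coeffs a.
Proof.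
move=> hB r r0.
have B0 : 0 <= B by apply: le_trans (hB 0%N); rewrite mulr_ge0 ?normc_ge0 // ltW.
pose u := fun n => Normc.normc (a n) * r ^+ n.
have u0 : forall n, 0 <= u n by move=> n; rewrite mulr_ge0 ?normc_ge0 ?exprn_ge0.
have [N HN] : exists N, forall n, (N <= n)%N -> 2 * r + 1 <= p n `^ (n%:R)^-1.
  by move: p_growth => /cvgryPge /(_ (2 * r + 1)) [N _ HN]; exists N => n; apply: HN.
pose q : R := 2^-1.
have q0 : 0 <= q by rewrite /q invr_ge0.
have uN : forall n, (N < n)%N -> u n <= B * q ^+ n.
  move=> n Nn; pose A := 2 * r + 1.
  have A0 : 0 < A by rewrite /A ltr_wpDl ?mulr_ge0 // ltr01.
  have pA : A ^+ n <= p n.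
    have e : p n = (p n `^ (n%:R)^-1) ^+ n.
      rewrite -powR_mulrn ?powR_ge0 // -powRrM mulVf ?powRr1 ?ltW //.
      by rewrite pnatr_eq0 -lt0n (leq_ltn_trans _ Nn).
    rewrite [X in _ <= X]e lerXn2r // ?nnegrE ?powR_ge0 ?(ltW A0) //.
    exact: HN (ltnW Nn).
  have h1 : Normc.normc (a n) <= B / p n by rewrite ler_pdivlMr // mulrC.
  apply: le_trans (ler_wpM2r (exprn_ge0 _ r0) h1) _.
  rewrite -mulrA ler_wpM2l //.
  have hA : (p n)^-1 <= (A ^+ n)^-1.
    by rewrite lef_pV2 ?posrE ?exprn_gt0.
  apply: le_trans (ler_wpM2r (exprn_ge0 _ r0) hA) _.
  rewrite -exprVn -exprMn lerXn2r ?nnegrE //; first by rewrite mulr_ge0 ?invr_ge0 ?(ltW A0).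
  rewrite ler_pdivrMl // /q /A; lra.
pose C0 := B + \sum_(m < N.+1) u m * 2 ^+ m.
have hv : forall n, u n <= C0 * q ^+ n.
  move=> n; case: (ltnP N n) => Nn.
    apply: le_trans (uN n Nn) _; apply: ler_wpM2r; first exact: exprn_ge0.
    by rewrite /C0 lerDl sumr_ge0 // => m _; rewrite mulr_ge0 ?exprn_ge0.
  have -> : u n = (u n * 2 ^+ n) * q ^+ n.
    by rewrite -mulrA -exprMn /q mulfV ?expr1n ?mulr1.
  apply: ler_wpM2r; first exact: exprn_ge0.
  rewrite /C0 ler_wpDl //.
  have nN : (n < N.+1)%N by [].
  rewrite (bigD1 (Ordinal nN)) //= lerDl sumr_ge0 // => m _.
  by rewrite mulr_ge0 ?exprn_ge0.
apply: (@series_le_cvg _ u (geometric C0 q)) => //.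
  by move=> n; rewrite /= mulr_ge0 ?exprn_ge0 // addr_ge0 // sumr_ge0 // => m _; rewrite mulr_ge0 ?exprn_ge0.
apply: is_cvg_geometric_series.
rewrite ger0_norm // /q; lra.
Qed.

Notation rc := (real_complex _).

Lemma mx_bound (R : realType) (p : nat -> R) (p_pos : forall n, 0 < p n)
  m n (A : 'M[nat -> R[i]]_(m, n)) : mxinA p A ->
  exists M : R, 0 <= M /\ forall i j t, p t * Normc.normc (A i j t) <= M.
Proof.
move=> hA.
have : forall ij : 'I_m * 'I_n, exists M : R,
    forall t, p t * Normc.normc (A ij.1 ij.2 t) <= M.
  by move=> ij; exact: (hA ij.1 ij.2).2.
case/choice => Mf HM.
have M0 : forall ij, 0 <= Mf ij.
  by move=> ij; apply: le_trans (HM ij 0%N); rewrite mulr_ge0 ?normc_ge0 // ltW.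
exists (\sum_ij Mf ij); split; first by rewrite sumr_ge0.
move=> i j t; apply: le_trans (HM (i, j) t) _.
by rewrite (bigD1 (i, j)) //= lerDl sumr_ge0.
Qed.

Lemma normc_real (R : realType) (x : R) : Normc.normc (real_complex R x) = `|x|.
Proof. by rewrite /Normc.normc /= expr0n /= addr0 sqrtr_sqr. Qed.

Lemma scale_bound (R : realType) (x : R) (y : R[i]) : 0 < x ->
  x * Normc.normc (real_complex R x^-1 * y) = Normc.normc y.
Proof.
move=> x0; rewrite Normc.normcM normc_real ger0_norm ?invr_ge0 ?ltW //.
by rewrite mulrA mulfV ?mul1r // gt_eqF.
Qed.

Lemma normc_le (R : realType) (x : R[i]) (b : R) : `|x| <= real_complex R b ->
  Normc.normc x <= b.
Proof. by move=> h; rewrite -lecR; exact: h. Qed.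

Lemma inA_of (R : realType) (p : nat -> R)
  (p_pos : forall n, 0 < p n)
  (p_growth : (fun n => p n `^ (n%:R)^-1) @ \oo --> +oo)
  (a : nat -> R[i]) (B : R) :
  (forall n, p n * Normc.normc (a n) <= B) -> inA p a.
Proof. move=> h; split; [exact: entire_of_bound h | by exists B]. Qed.

Theorem mainTheorem3 (R : realType) (p : nat -> R)
  (p_pos : forall n, 0 < p n)
  (p_growth : (fun n => p n `^ (n%:R)^-1) @ \oo --> +oo)
  (k K : nat) (hkK : (k < K)%N)
  (f : 'M[nat -> R[i]]_(K, k)) (hf : mxinA p f)
  (hinv : exists g : 'M[nat -> R[i]]_(k, K),
            mxinA p g /\ mxmulA p g f = idA p k k) :
  exists (fc : 'M[nat -> R[i]]_(K, K - k)) (G : 'M[nat -> R[i]]_(K, K)),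
    mxinA p fc /\ mxinA p G /\
    mxmulA p G (row_mx f fc) = idA p K (k + (K - k)).
Proof.
move: hinv => [g [hg hgf]].
have [Mf [Mf0 bF]] := mx_bound p_pos hf.
have [Mg [Mg0 bG]] := mx_bound p_pos hg.
have cci : forall t, rc (p t) * rc (p t)^-1 = 1 :> R[i].
  by move=> t; rewrite -rmorphM mulfV ?rmorph1 // gt_eqF.
pose Fs t : 'M[R[i]]_(K, k) := \matrix_(i, j) (rc (p t) * f i j t).
pose gs t : 'M[R[i]]_(k, K) := \matrix_(i, j) (rc (p t) * g i j t).
have hnorm : forall (t : nat) (x : R[i]) (b : R), p t * Normc.normc x <= b ->
    `|rc (p t) * x| <= rc b.
  move=> t x b h.
  change (rc (Normc.normc (rc (p t) * x)) <= rc b).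
  by rewrite lecR Normc.normcM normc_real ger0_norm // ltW.
pose Bv := Mg + K%:R * (1 * (1 + k%:R * (Mf * Mg))).
have key : forall t, exists FG : 'M[R[i]]_(K, K - k) * 'M[R[i]]_(K, K),
    (forall i j, `|FG.1 i j| <= 1) /\ (forall i j, `|FG.2 i j| <= rc Bv) /\
    forall i j, (FG.2 *m row_mx (Fs t) FG.1) i j = ((i : nat) == j)%:R.
  move=> t.
  have gF : gs t *m Fs t = 1%:M.
    apply/matrixP => i j.
    have := congr1 (fun M : 'M[nat -> R[i]]_k => M i j t) hgf.
    rewrite !mxE /hadp /= => H.
    have -> : \sum_h (gs t i h * Fs t h j) =
              rc (p t) * \sum_h (rc (p t) * g i h t * f h j t).
      rewrite mulr_sumr; apply: eq_bigr => h _; rewrite !mxE.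
      by rewrite !mulrA [rc (p t) * g i h t * rc (p t)]mulrAC.
    have -> : (i == j) = ((i : nat) == j) by [].
    rewrite H; case: (_ == _) => /=; rewrite /epsA /zeroA ?cci ?mulr0 //.
  have hMf' : 0 <= rc Mf by rewrite ler0c.
  have hMg' : 0 <= rc Mg by rewrite ler0c.
  have bF' : forall i j, `|Fs t i j| <= rc Mf.
    by move=> i j; rewrite mxE; apply: hnorm; apply: bF.
  have bG' : forall i j, `|gs t i j| <= rc Mg.
    by move=> i j; rewrite mxE; apply: hnorm; apply: bG.
  have [fc [G [h1 [h2 h3]]]] := core (ltnW hkK) hMf' hMg' bF' bG' gF.
  exists (fc, G); split => //; split => // i j.
  have -> : rc Bv = rc Mg + K%:R * (1 * (1 + k%:R * (rc Mf * rc Mg))).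
    by rewrite /Bv !(rmorphD, rmorphM, rmorph1, rmorph_nat).
  exact: h2.
case/choice: key => FG HFG.
pose fc : 'M[nat -> R[i]]_(K, K - k) :=
  \matrix_(i, j) (fun t => rc (p t)^-1 * (FG t).1 i j).
pose G : 'M[nat -> R[i]]_(K, K) :=
  \matrix_(i, j) (fun t => rc (p t)^-1 * (FG t).2 i j).
exists fc, G; split; [|split].
- move=> i j; apply: (@inA_of _ _ p_pos p_growth _ 1) => t.
  rewrite mxE scale_bound //; apply: normc_le; rewrite rmorph1.
  exact: (HFG t).1.
- move=> i j; apply: (@inA_of _ _ p_pos p_growth _ Bv) => t.
  rewrite mxE scale_bound //; apply: normc_le.
  exact: (HFG t).2.1.
apply/matrixP => i j; rewrite !mxE; apply: funext => t /=.
have hrow : forall h, row_mx f fc h j t =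
    rc (p t)^-1 * row_mx (Fs t) (FG t).1 h j.
  move=> h; case: (split_ordP j) => j' ->; rewrite ?row_mxEl ?row_mxEr !mxE //.
  by rewrite mulrA [rc (p t)^-1 * _]mulrC cci mul1r.
transitivity (rc (p t)^-1 * ((FG t).2 *m row_mx (Fs t) (FG t).1) i j).
  rewrite [in RHS]mxE mulr_sumr; apply: eq_bigr => h _.
  rewrite /hadp hrow !mxE mulrA mulrA cci mul1r.
  by rewrite -mulrA mulrCA.
rewrite (HFG t).2.2; case: (_ == _) => /=; rewrite /epsA /zeroA ?mulr1 ?mulr0 //.
Qed.
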